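(* Let $n\ge 1$, $m\ge 2$, $N=\{1,\dots,n\}$, $M=\{1,\dots,m\}$, $R\in\mathbb{R}$, $b\in\mathbb{R}^n$, and bounds $l,u\in\mathbb{R}^{n\times m}$ with $l_{i,1}\le u_{i,1}<l_{i,2}\le u_{i,2}<\dots<l_{i,m}\le u_{i,m}$ for every $i\in N$. Let $K=(K_1,\dots,K_{m-1})\in\mathbb{Z}^{m-1}$ with $0\le K_1\le\dots\le K_{m-1}<n$, and let $K^+=(K_1,\dots,K_{m-2},K_{m-1}+1)$. For such a partition vector $K$ (with the conventions $K_0=0$, $K_m=n$) let $j^K(i)$ be the unique $j\in M$ with $K_{j-1}<i\le K_j$, and for $\lambda\in\mathbb{R}$ define \[ x_i(K,\lambda)=\begin{cases} l_{i,j^K(i)} & \text{if } \lambda\le l_{i,j^K(i)}+b_i,\\ \lambda-b_i & \text{if } l_{i,j^K(i)}+b_i\le\lambda\le u_{i,j^K(i)}+b_i,\\ u_{i,j^K(i)} & \text{if } \lambda\ge u_{i,j^K(i)}+b_i,\end{cases}\qquad z(K,\lambda)=\sum_{i\in N}x_i(K,\lambda). \] Suppose $\lambda^K,\lambda^{K^+}\in\mathbb{R}$ satisfy $z(K,\lambda^K)=R$ and $z(K^+,\lambda^{K^+})=R$. Then $\lambda^{K^+}>\lambda^K$.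
   Context: $x(K,\lambda)$ is the optimal solution of the Lagrangian relaxation of the quadratic problem $Q(K)$: $\min\sum_i\frac12(x_i+b_i)^2$ s.t. $\sum_i x_i=R$, $x_i\in[l_{i,j^K(i)},u_{i,j^K(i)}]$; a value $\lambda^K$ with $z(K,\lambda^K)=R$ is an optimal Lagrange multiplier of $Q(K)$, which exists when $Q(K)$ is feasible. *)

(* Defs.v *)
From mathcomp Require Import all_boot all_order all_algebra.
From mathcomp Require Import reals.
Set Implicit Arguments. Unset Strict Implicit. Unset Printing Implicit Defensive.
Import Order.TTheory GRing.Theory Num.Theory.
Local Open Scope ring_scope.

(* Indices are 1-based naturals as in the paper: i in 1..n, j in 1..m.
   A partition vector K is a function nat -> nat, with K j meaningful for
   j in 1..m-1.  Extended with the conventions K_0 = 0, K_m = n. *)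
Definition Kext (n m : nat) (K : nat -> nat) (j : nat) : nat :=
  if j == 0%N then 0%N else if (j < m)%N then K j else n.

(* j^K(i): the (unique, under the monotonicity hypotheses) j in M with
   K_{j-1} < i <= K_j.  Encoded with j' : 'I_m standing for j = j'+1. *)
Definition jK (n m : nat) (K : nat -> nat) (i : nat) : nat :=
  match [pick j : 'I_m | (Kext n m K j < i <= Kext n m K j.+1)%N] with
  | Some j => j.+1
  | None => 0%N
  end.

Definition Kplus (m : nat) (K : nat -> nat) (j : nat) : nat :=
  if j == m.-1 then (K j).+1 else K j.

Section XZ.
Variable R : realType.

Definition xK (n m : nat) (l u : nat -> nat -> R) (b : nat -> R)
    (K : nat -> nat) (lam : R) (i : nat) : R :=
  let j := jK n m K i in
  if lam <= l i j + b i then l i j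
  else if lam <= u i j + b i then lam - b i
  else u i j.

Definition zK (n m : nat) (l u : nat -> nat -> R) (b : nat -> R)
    (K : nat -> nat) (lam : R) : R :=
  \sum_(1 <= i < n.+1) xK n m l u b K lam i.
End XZ.

(* Main.v *)
Require Import Defs.
From mathcomp Require Import all_boot all_order all_algebra.
From mathcomp Require Import reals.
From mathcomp Require Import lra zify.
Import Order.TTheory GRing.Theory Num.Theory.
Local Open Scope ring_scope.

Lemma clamp_mono (R : realType) (l u b x y : R) : l <= u -> x <= y ->
  (if x <= l + b then l else if x <= u + b then x - b else u) <=
  (if y <= l + b then l else if y <= u + b then y - b else u).
Proof.
move=> hlu hxy.
case: (leP x (l + b)) => h1; case: (leP y (l + b)) => h2;
case: (leP x (u + b)) => h3; case: (leP y (u + b)) => h4; lra.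
Qed.

Lemma clamp_lo (R : realType) (l u b x : R) : l <= u ->
  l <= (if x <= l + b then l else if x <= u + b then x - b else u).
Proof.
move=> hlu; case: (leP x (l + b)) => h1; case: (leP x (u + b)) => h3; lra.
Qed.

Lemma clamp_hi (R : realType) (l u b x : R) : l <= u ->
  (if x <= l + b then l else if x <= u + b then x - b else u) <= u.
Proof.
move=> hlu; case: (leP x (l + b)) => h1; case: (leP x (u + b)) => h3; lra.
Qed.

Lemma jK_range n m K i : (1 <= m)%N -> (1 <= i <= n)%N -> (1 <= jK n m K i <= m)%N.
Proof.
move=> hm hi; rewrite /jK; case: pickP => [j _|H]; first by rewrite /= ltn_ord.
exfalso.
have exP : exists k, (i <= Kext n m K k)%N && (k <= m)%N.
  exists m; rewrite /Kext leqnn andbT ltnn; case: ifP => h; lia.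
case: (ex_minnP exP) => k /andP[hk1 hk2] hmin.
have k0 : k != 0%N.
  apply/eqP => k0; move: hk1; rewrite k0 /Kext eqxx; lia.
have hk : (k.-1 < m)%N by lia.
move: (H (Ordinal hk)) => /=.
have -> : k.-1.+1 = k by lia.
rewrite hk1 andbT => /negbT; rewrite -leqNgt => hle.
have := hmin k.-1; rewrite hle /=.
have -> : (k.-1 <= m)%N by lia.
move=> /(_ isT); lia.
Qed.

Lemma Kext_plus n m K k : (2 <= m)%N ->
  Kext n m (Kplus m K) k =
  if k == m.-1 then (Kext n m K k).+1 else Kext n m K k.
Proof.
move=> hm; rewrite /Kext /Kplus.
case: (eqVneq k 0%N) => [->|k0].
  have -> : (0 == m.-1) = false by apply/negbTE; lia.
  by [].
case: (eqVneq k m.-1) => [->|km] /=.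
  by have -> : (m.-1 < m)%N by lia.
by case: ifP.
Qed.

Lemma Kext_last n m K : (2 <= m)%N -> Kext n m K m.-1 = K m.-1.
Proof.
move=> hm; rewrite /Kext.
have -> : (m.-1 == 0%N) = false by apply/negbTE; lia.
by have -> : (m.-1 < m)%N by lia.
Qed.

Lemma jK_same n m K i : (2 <= m)%N -> i != (K m.-1).+1 ->
  jK n m (Kplus m K) i = jK n m K i.
Proof.
move=> hm hi; rewrite /jK (@eq_pick _ _ (fun j : 'I_m =>
   (Kext n m K j < i <= Kext n m K j.+1)%N)) //.
move=> j /=; rewrite !Kext_plus //.
have hK := @Kext_last n m K hm.
case: (eqVneq (nat_of_ord j) m.-1) => [hj|hj];
case: (eqVneq j.+1 m.-1) => [hj'|hj'] //=.
- lia.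
- by rewrite hj hK; congr andb; lia.
- by rewrite hj' hK; congr andb; lia.
Qed.

Lemma Kmono m K a c : (forall j, (1 <= j)%N -> (j.+1 <= m.-1)%N -> (K j <= K j.+1)%N) ->
  (1 <= a)%N -> (a <= c)%N -> (c <= m.-1)%N -> (K a <= K c)%N.
Proof.
move=> hK ha; elim: c => [|c IH] hac hc; first lia.
case: (eqVneq a c.+1) => [->//|ne].
have := hK c; have := IH; lia.
Qed.

Theorem lemma4 (R : realType) (n m : nat) (Rhs : R) (b : nat -> R)
  (l u : nat -> nat -> R) (K : nat -> nat) (lamK lamKp : R) :
  (1 <= n)%N -> (2 <= m)%N ->
  (forall i j, (1 <= i <= n)%N -> (1 <= j <= m)%N -> l i j <= u i j) ->
  (forall i j, (1 <= i <= n)%N -> (1 <= j < m)%N -> u i j < l i j.+1) ->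
  (forall j, (1 <= j)%N -> (j.+1 <= m.-1)%N -> (K j <= K j.+1)%N) ->
  (K m.-1 < n)%N ->
  zK n m l u b K lamK = Rhs ->
  zK n m l u b (Kplus m K) lamKp = Rhs ->
  lamKp > lamK.
Proof.
move=> hn hm hlu hul hK hKn zK1 zK2.
move Es: (K m.-1).+1 => s.
have hs : (1 <= s <= n)%N by lia.
have Kext_le : forall k, (k <= m.-1)%N -> (Kext n m K k <= K m.-1)%N.
  move=> k hk; rewrite /Kext; case: ifP => h0; first lia.
  have -> : (k < m)%N by lia.
  move/negbT: h0 => h0.
  apply: (@Kmono m K) => //; lia.
have j1 : jK n m K s = m.
  rewrite /jK; case: pickP => [j /andP[h1 h2]|H]; last first.
    have hj : (m.-1 < m)%N by lia.
    move: (H (Ordinal hj)) => /=.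
    have -> : m.-1.+1 = m by lia.
    rewrite /Kext.
    have -> : (m.-1 == 0%N) = false by apply/negbTE; lia.
    have -> : (m.-1 < m)%N by lia.
    rewrite ltnn ifN; last lia.
    move/negbT; lia.
  have := ltn_ord j => hj.
  case: (eqVneq (nat_of_ord j) m.-1) => [->|ne]; first lia.
  have := Kext_le j.+1; lia.
have j2 : jK n m (Kplus m K) s = m.-1.
  rewrite /jK; case: pickP => [j /andP[h1 h2]|H]; last first.
    have hj : (m.-2 < m)%N by lia.
    move: (H (Ordinal hj)) => /=.
    rewrite !Kext_plus //.
    have -> : (m.-2 == m.-1) = false by apply/negbTE; lia.
    have -> : (m.-2.+1 = m.-1)%N by lia.
    rewrite eqxx.
    have := Kext_le m.-2.
    rewrite Kext_last //.
    case: (eqVneq m.-2 0%N) => [e|ne].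
      by rewrite e /Kext eqxx; lia.
    lia.
  move: h1 h2; rewrite !Kext_plus //.
  have := ltn_ord j => hj.
  case: (eqVneq (nat_of_ord j) m.-1) => [e|ne].
    by rewrite e Kext_last //; lia.
  case: (eqVneq j.+1 m.-1) => [e|ne'] h1 h2; first lia.
  have : (j.+1 <= m.-2)%N by lia.
  have := Kext_le j.+1; lia.
rewrite ltNge; apply/negP => hle.
have : zK n m l u b (Kplus m K) lamKp < zK n m l u b K lamK; last by lra.
rewrite /zK /index_iota subn1 /=.
have sin : s \in iota 1 n by rewrite mem_iota; lia.
rewrite (bigD1_seq s) ?iota_uniq // [X in _ < X](bigD1_seq s) ?iota_uniq //=.
apply: ltr_leD.
  rewrite /xK j1 j2.
  have hm1 : (1 <= m.-1 < m)%N by lia.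
  apply: (le_lt_trans (clamp_hi _ _ _ _ _ (hlu s m.-1 hs _))); first lia.
  apply: (lt_le_trans (hul _ _ hs hm1)).
  have -> : m.-1.+1 = m by lia.
  by apply: clamp_lo; apply: hlu => //; lia.
rewrite big_seq_cond [X in _ <= X]big_seq_cond.
apply: ler_sum => i /andP[]; rewrite mem_iota => hi ns.
rewrite /xK jK_same ?Es //.
apply: clamp_mono => //; apply: hlu; first lia.
apply: jK_range; lia.
Qed.
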